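(* Let $n$ be a nonnegative integer and define \[ \widetilde{R}_n(a,c)=(1-a)_n(a)_n\,{}_3F_2\!\left(\left.{-n,a-c-n,c \atop \frac{a-n}{2},\frac{1+a-n}{2}}\right| \frac{1}{4}\right). \] Then, whenever all expressions are defined, \[ {}_3F_2\!\left(\left.{-n,a-c-n,c \atop \frac{a-n}{2},\frac{1+a-n}{2}}\right| \frac{1}{4}\right) =\frac{(1+c-a)_n(a-c)_n}{(1-a)_n(a)_n}\,{}_3F_2\!\left(\left.{-n,1-a-n,c \atop \frac{1+c-a-n}{2},\frac{2+c-a-n}{2}}\right| \frac{1}{4}\right), \] i.e. $\widetilde{R}_n(a,c)=\widetilde{R}_n(1+c-a,c)$. The group of transformations of $(a,c)$ generated by $(a,c)\mapsto(a,a-c-n)$ and $(a,c)\mapsto(1+c-a,c)$ is isomorphic to $S_3$ and yields the invariances $\widetilde{R}_n(a,c)=\widetilde{R}_n(a,c)=\widetilde{R}_n(a,a-c-n)=\widetilde{R}_n(1+c-a,c)=\widetilde{R}_n(1+c-a,1-a-n)=\widetilde{R}_n(1-c-n,a-c-n)=\widetilde{R}_n(1-c-n,1-a-n)$. Moreover, $\widetilde{V}_n(x,y,z)=\widetilde{R}_n\!\left(\frac{2+2x-y-z-n}{3},\frac{1+x+y-2z-2n}{3}\right)$ is invariant under all six permutations of $x,y,z$.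
   Context: For $a\in\mathbb{C}$, $(a)_0=1$ and $(a)_k=a(a+1)\cdots(a+k-1)$ for $k\ge1$. The hypergeometric series is ${}_rF_s\!\left(\left.{\alpha_1,\ldots,\alpha_r\atop \beta_1,\ldots,\beta_s}\right|z\right)=\sum_{k\ge0}\frac{(\alpha_1)_k\cdots(\alpha_r)_k}{k!(\beta_1)_k\cdots(\beta_s)_k}z^k$, with no lower parameter zero or a negative integer; when an upper parameter is $-n$ it is a finite sum over $0\le k\le n$. *)

(* Defs.v *)
From HB Require Import structures.
From mathcomp Require Import all_boot all_order all_algebra.
From mathcomp Require Import complex.
From mathcomp Require Import reals.
Set Implicit Arguments. Unset Strict Implicit. Unset Printing Implicit Defensive.
Import Order.TTheory GRing.Theory Num.Theory.
Local Open Scope ring_scope.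
Local Open Scope complex_scope.

Section Hyper.
Variable F : fieldType.

Definition poch (a : F) (k : nat) : F := \prod_(i < k) (a + i%:R).

Definition lower_ok (b : F) : Prop := forall m : nat, b <> - m%:R.

(* When -n is among the upper
   parameters (the only use below), all terms with k > n vanish, so this is
   exactly the series rFs(us; ls | z) of the paper. *)
Definition hypF (n : nat) (us ls : seq F) (z : F) : F :=
  \sum_(k < n.+1)
    (\prod_(u <- us) poch u k) / (k`!%:R * \prod_(l <- ls) poch l k) * z ^+ k.

Definition F32 (n : nat) (a c : F) : F :=
  hypF n [:: - n%:R; a - c - n%:R; c] [:: (a - n%:R) / 2; (1 + a - n%:R) / 2] (1/4).

Definition Rt (n : nat) (a c : F) : F := poch (1 - a) n * poch a n * F32 n a c.

Definition Rt_defined (n : nat) (a : F) : Prop :=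
  lower_ok ((a - n%:R) / 2) /\ lower_ok ((1 + a - n%:R) / 2).

Definition Vt (n : nat) (x y z : F) : F :=
  Rt n ((2 + 2 * x - y - z - n%:R) / 3) ((1 + x + y - 2 * z - 2 * n%:R) / 3).

Definition sig1 (n : nat) (p : F * F) : F * F := (p.1, p.1 - p.2 - n%:R).
Definition sig2 (n : nat) (p : F * F) : F * F := (1 + p.2 - p.1, p.2).
End Hyper.

(* Main.v *)
Require Import Defs.
From HB Require Import structures.
From mathcomp Require Import all_boot all_order all_algebra.
From mathcomp Require Import complex.
From mathcomp Require Import reals.
From mathcomp Require Import ring zify.
Set Implicit Arguments. Unset Strict Implicit. Unset Printing Implicit Defensive.
Import Order.TTheory GRing.Theory Num.Theory.
Local Open Scope ring_scope.

Lemma pochS (F : numFieldType) (u : F) k : poch u k.+1 = poch u k * (u + k%:R).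
Proof. by rewrite /poch big_ord_recr. Qed.

Lemma pochSl (F : numFieldType) (u : F) k : poch u k.+1 = u * poch (u + 1) k.
Proof.
rewrite /poch big_ord_recl addr0; congr (_ * _); apply: eq_bigr => i _.
by rewrite /bump /= natrD addrA; congr (_ + _); rewrite add1n /=; ring.
Qed.

Lemma poch0 (F : numFieldType) (u : F) : poch u 0 = 1.
Proof. by rewrite /poch big_ord0. Qed.

Lemma poch_add (F : numFieldType) (u : F) a b :
  poch u (a + b) = poch u a * poch (u + a%:R) b.
Proof.
elim: b => [|b IH]; first by rewrite addn0 poch0 mulr1.
by rewrite addnS !pochS IH natrD addrA mulrA.
Qed.

Lemma poch_refl (F : numFieldType) (v : F) k :
  poch (1 - k%:R - v) k = (-1) ^+ k * poch v k.
Proof.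
elim: k => [|k IH]; first by rewrite !poch0 expr0 mulr1.
rewrite pochSl pochS exprS.
have -> : 1 - k.+1%:R - v + 1 = 1 - k%:R - v by rewrite -natr1; ring.
rewrite IH -natr1; ring.
Qed.

Lemma poch_negn (F : numFieldType) (n k : nat) : (k <= n)%N ->
  poch (- n%:R : F) k = (-1) ^+ k * ('C(n, k) * k`!)%:R.
Proof.
rewrite bin_ffact; elim: k => [|k IH] H; first by rewrite poch0 expr0 mulr1 ?ffactn0.
rewrite pochS IH ?(ltnW H) // ffactnSr natrM natrB ?(ltnW H) // exprS; ring.
Qed.

Lemma poch_half (F : numFieldType) (b : F) k :
  poch (b / 2) k * poch ((1 + b) / 2) k * 4 ^+ k = poch b (k.*2).
Proof.
elim: k => [|k IH]; first by rewrite !poch0 expr0 !mulr1.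
rewrite doubleS !pochS -IH exprS -!natr1 -muln2 natrM.
have h2 : (2 : F) != 0 by rewrite pnatr_eq0.
by field.
Qed.

Lemma poch_neq0 (F : numFieldType) (b : F) k : lower_ok b -> poch b k != 0.
Proof.
move=> H; rewrite /poch prodf_seq_neq0; apply/allP => i _ /=.
apply/eqP => /eqP; rewrite addr_eq0 => /eqP E; exact: (H i).
Qed.

Definition Lf (F : numFieldType) (m : nat) (u v : F) (p : {poly F}) : F :=
  \sum_(i < m.+1) p`_i * poch u i * poch v (m - i).

Lemma LfD (F : numFieldType) m (u v : F) (p q : {poly F}) : Lf m u v (p + q) = Lf m u v p + Lf m u v q.
Proof. rewrite /Lf -big_split; apply: eq_bigr => i _; by rewrite coefD !mulrDl. Qed.

Lemma LfZ (F : numFieldType) m (u v : F) c (p : {poly F}) : Lf m u v (c *: p) = c * Lf m u v p.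
Proof. rewrite /Lf mulr_sumr; apply: eq_bigr => i _; rewrite coefZ; ring. Qed.

Lemma Lf_sum (F : numFieldType) m (u v : F) N (P : 'I_N -> {poly F}) :
  Lf m u v (\sum_(j < N) P j) = \sum_(j < N) Lf m u v (P j).
Proof.
rewrite /Lf exchange_big; apply: eq_bigr => i _.
by rewrite coef_sum !mulr_suml.
Qed.

Lemma LfX (F : numFieldType) m (u v : F) (p : {poly F}) :
  Lf m.+1 u v (p * 'X) = u * Lf m (u + 1) v p.
Proof.
rewrite /Lf big_ord_recl coefMX /= mul0r mul0r add0r mulr_sumr.
apply: eq_bigr => i _; rewrite coefMX /= pochSl subSS; ring.
Qed.

Lemma LfY (F : numFieldType) m (u v : F) (p : {poly F}) : (size p <= m.+1)%N ->
  Lf m.+1 u v p = v * Lf m u (v + 1) p.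
Proof.
move=> Hs; rewrite /Lf big_ord_recr /= nth_default // mul0r mul0r addr0 mulr_sumr.
apply: eq_bigr => i _ /=; rewrite subSn ?pochSl; last by rewrite -ltnS.
ring.
Qed.

Lemma LfXk (F : numFieldType) k j (u v : F) (p : {poly F}) :
  Lf (j + k) u v (p * 'X^k) = poch u k * Lf j (u + k%:R) v p.
Proof.
elim: k u => [|k IH] u; first by rewrite addn0 expr0 mulr1 poch0 mul1r addr0.
rewrite addnS exprSr mulrA LfX IH pochSl -natr1.
have -> : u + 1 + k%:R = u + (k%:R + 1) by ring.
ring.
Qed.

Lemma LfYk (F : numFieldType) k j (u v : F) (p : {poly F}) : (size p <= j.+1)%N ->
  Lf (j + k) u v p = poch v k * Lf j u (v + k%:R) p.
Proof.
move=> Hs; elim: k v => [|k IH] v; first by rewrite addn0 poch0 mul1r addr0.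
rewrite addnS LfY; last by apply: (leq_trans Hs); rewrite ltnS leq_addr.
rewrite IH pochSl -natr1.
have -> : v + 1 + k%:R = v + (k%:R + 1) by ring.
ring.
Qed.

Lemma size_X1 (F : numFieldType) m : (size (('X + 1 : {poly F}) ^+ m) <= m.+1)%N.
Proof.
apply: leq_trans (size_poly_exp_leq _ _) _.
by rewrite -polyC1 size_XaddC mul1n.
Qed.

Lemma Lf_vand (F : numFieldType) m (u v : F) :
  Lf m u v (('X + 1) ^+ m) = poch (u + v) m.
Proof.
elim: m u v => [|m IH] u v.
  by rewrite /Lf big_ord1 expr0 coefC /= !poch0 !mulr1.
rewrite exprSr mulrDr mulr1 LfD LfX LfY ?size_X1 // !IH pochSl.
have -> : u + 1 + v = u + v + 1 by ring.
by rewrite addrA mulrDl.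
Qed.

Lemma Lf_mon (F : numFieldType) j k (u v : F) :
  Lf (j + k + k) u v (('X + 1) ^+ j * 'X^k) =
  poch u k * poch v k * poch (u + v + (k.*2)%:R) j.
Proof.
rewrite LfXk LfYk ?size_X1 // Lf_vand -addnn natrD.
have -> : u + k%:R + (v + k%:R) = u + v + (k%:R + k%:R) by ring.
ring.
Qed.

Definition Tf (F : numFieldType) (m : nat) (p : {poly F}) : {poly F} :=
  \sum_(i < m.+1) p`_i *: ('X^i * (- ('X + 1)) ^+ (m - i)).

Lemma Lf_refl_mon (F : numFieldType) j i (u v : F) :
  Lf (j + i) u (1 - (j + i)%:R - u - v) ('X^i * (- ('X + 1)) ^+ j) = poch u i * poch v j.
Proof.
have -> : - ('X + 1) = (-1 : F) *: ('X + 1 : {poly F}) by rewrite scaleN1r.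
rewrite exprZn -scalerAr LfZ [X in Lf _ _ _ X]mulrC LfXk Lf_vand.
have -> : u + i%:R + (1 - (j + i)%:R - u - v) = 1 - j%:R - v.
  by rewrite natrD; ring.
rewrite poch_refl; transitivity (((-1) ^+ j * (-1) ^+ j) * (poch u i * poch v j)); first ring.
by rewrite -exprMn mulrNN mulr1 expr1n mul1r.
Qed.

Lemma Lf_refl (F : numFieldType) m (u v : F) (p : {poly F}) :
  Lf m u v p = Lf m u (1 - m%:R - u - v) (Tf m p).
Proof.
rewrite /Tf Lf_sum /Lf; apply: eq_bigr => i _.
rewrite -/(Lf _ _ _ _) LfZ -mulrA; congr (_ * _).
have Hi : (i <= m)%N by rewrite -ltnS.
have := Lf_refl_mon (m - i) i u v; rewrite subnK // => ->.
Qed.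

Lemma TfD (F : numFieldType) m (p q : {poly F}) : Tf m (p + q) = Tf m p + Tf m q.
Proof. by rewrite /Tf -big_split; apply: eq_bigr => i _; rewrite coefD scalerDl. Qed.

Lemma TfX (F : numFieldType) m (p : {poly F}) : Tf m.+1 (p * 'X) = 'X * Tf m p.
Proof.
rewrite /Tf big_ord_recl coefMX /= scale0r add0r mulr_sumr.
apply: eq_bigr => i _; rewrite coefMX /= subSS exprS -scalerAr; congr (_ *: _).
by rewrite mulrA.
Qed.

Lemma TfY (F : numFieldType) m (p : {poly F}) : (size p <= m.+1)%N ->
  Tf m.+1 p = - ('X + 1) * Tf m p.
Proof.
move=> Hs; rewrite /Tf big_ord_recr /= nth_default // scale0r addr0 mulr_sumr.
apply: eq_bigr => i _ /=; rewrite subSn; last by rewrite -ltnS.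
by rewrite exprS -scalerAr mulrCA.
Qed.

Definition Qp (F : numFieldType) : {poly F} := ('X + 1) ^+ 2 - 'X.

Lemma size_Qn (F : numFieldType) n : (size ((Qp F) ^+ n) <= (n.*2).+1)%N.
Proof.
apply: leq_trans (size_poly_exp_leq _ _) _.
have H : (size (Qp F) <= 3)%N.
  rewrite /Qp; apply: leq_trans (size_polyD _ _) _.
  by rewrite geq_max size_X1 size_polyN size_polyX.
rewrite ltnS -mul2n mulnC [(2 * n)%N]mulnC leq_mul2l.
by apply/orP; right; case: (size (Qp F)) H => [|[|[|[|]]]].
Qed.

Lemma Tf_Q (F : numFieldType) n : Tf (n.*2) ((Qp F) ^+ n) = (Qp F) ^+ n.
Proof.
elim: n => [|n IH]; first by rewrite /Tf big_ord1 expr0 coefC /= scale1r mulr1.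
have Hs := size_Qn F n.
have E : (Qp F) ^+ n.+1 = (Qp F) ^+ n * 'X * 'X + (Qp F) ^+ n * 'X + (Qp F) ^+ n.
  by rewrite exprSr /Qp; ring.
rewrite {1}E doubleS !TfD !TfX TfY; last first.
  exact: Hs.
rewrite TfY; last exact: (leq_trans Hs).
rewrite TfY // IH E; ring.
Qed.

Definition Gf (F : numFieldType) (n : nat) (u v : F) : F :=
  \sum_(k < n.+1) (-1) ^+ k * 'C(n, k)%:R * poch u k * poch v k
     * poch (u + v + (k.*2)%:R) ((n - k).*2).

Lemma G_L (F : numFieldType) n (u v : F) : Gf n u v = Lf (n.*2) u v ((Qp F) ^+ n).
Proof.
rewrite /Qp exprDn Lf_sum /Gf; apply: eq_bigr => i _.
have Hi : (i <= n)%N by rewrite -ltnS.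
have -> : - ('X : {poly F}) = (-1 : F) *: 'X by rewrite scaleN1r.
rewrite exprZn -scalerAr -scaler_nat LfZ LfZ -exprM mul2n.
have -> : n.*2 = ((n - i).*2 + i + i)%N by rewrite -addnA addnn -doubleD subnK.
rewrite Lf_mon; ring.
Qed.

Lemma G_refl (F : numFieldType) n (u v : F) :
  Gf n u v = Gf n u (1 - (n%:R + n%:R) - u - v).
Proof. by rewrite !G_L Lf_refl Tf_Q -natrD addnn. Qed.

Lemma G_swap (F : numFieldType) n (u v : F) : Gf n u v = Gf n v u.
Proof. by apply: eq_bigr => i _; rewrite [v + u]addrC; ring. Qed.

Lemma G_cyc (F : numFieldType) n (x y z : F) : x + y + z = 1 - (n%:R + n%:R) ->
  Gf n x y = Gf n z x.
Proof.
move=> E; rewrite G_refl G_swap.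
have -> : 1 - (n%:R + n%:R) - x - y = z by rewrite -E; ring.
by [].
Qed.

Lemma Rt_G (F : numFieldType) n (a c : F) : Rt_defined n a ->
  Rt n a c = (-1) ^+ n * Gf n c (a - c - n%:R).
Proof.
case=> H1 H2; rewrite /Rt /F32 /hypF /Gf.
have -> : poch (1 - a) n = (-1) ^+ n * poch (a - n%:R) n.
  by rewrite -poch_refl; congr poch; ring.
have E : poch (a - n%:R) n * poch a n = poch (a - n%:R) (n.*2).
  by rewrite -addnn poch_add subrK.
rewrite -[(-1) ^+ n * _ * poch a n]mulrA E -mulrA !mulr_sumr; apply: eq_bigr => k _.
have Hk : (k <= n)%N by rewrite -ltnS.
rewrite !big_cons !big_nil !mulr1.
have -> : c + (a - c - n%:R) = a - n%:R by ring.
have -> : poch (a - n%:R) (n.*2) = poch (a - n%:R) (k.*2) * poch (a - n%:R + (k.*2)%:R) ((n - k).*2).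
  by rewrite -poch_add -doubleD subnKC.
have Hh : poch (a - n%:R) (k.*2) = poch ((a - n%:R) / 2) k * poch ((1 + a - n%:R) / 2) k * 4 ^+ k.
  by rewrite -poch_half addrA.
rewrite Hh poch_negn // natrM div1r exprVn.
have n1 := poch_neq0 k H1.
have n2 := poch_neq0 k H2.
have n3 : (k`!%:R : F) != 0 by rewrite pnatr_eq0 -lt0n fact_gt0.
have n4 : (4 : F) ^+ k != 0 by rewrite expf_neq0 // pnatr_eq0.
field.
by rewrite n1 n2 n3 n4.
Qed.
Unset Implicit Arguments.
Local Open Scope complex_scope.

Theorem mainTheorem13 (R : realType) (n : nat) :
  (* (1) the transformation, whenever all expressions are defined *)
  (forall a c : R[i],
     Rt_defined n a -> Rt_defined n (1 + c - a) ->
     poch (1 - a) n * poch a n != 0 ->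
     hypF n [:: - n%:R; a - c - n%:R; c]
            [:: (a - n%:R) / 2; (1 + a - n%:R) / 2] (1/4)
     = poch (1 + c - a) n * poch (a - c) n / (poch (1 - a) n * poch a n)
       * hypF n [:: - n%:R; 1 - a - n%:R; c]
            [:: (1 + c - a - n%:R) / 2; (2 + c - a - n%:R) / 2] (1/4)
     /\ Rt n a c = Rt n (1 + c - a) c)
  (* (2) the group generated by sig1, sig2 is S_3: two involutions whose
         product has order exactly 3 (presentation of the dihedral group D_3 = S_3) *)
  /\ (forall p : R[i] * R[i], sig1 n (sig1 n p) = p)
  /\ (forall p : R[i] * R[i], sig2 n (sig2 n p) = p)
  /\ (forall p : R[i] * R[i],
        sig1 n (sig2 n (sig1 n (sig2 n (sig1 n (sig2 n p))))) = p)
  /\ (exists p : R[i] * R[i], sig1 n (sig2 n p) <> p)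
  (* (3) the six invariances of R~_n, whenever defined *)
  /\ (forall a c : R[i],
        Rt_defined n a -> Rt_defined n (1 + c - a) -> Rt_defined n (1 - c - n%:R) ->
        [/\ Rt n a c = Rt n a (a - c - n%:R),
            Rt n a c = Rt n (1 + c - a) c,
            Rt n a c = Rt n (1 + c - a) (1 - a - n%:R),
            Rt n a c = Rt n (1 - c - n%:R) (a - c - n%:R)
          & Rt n a c = Rt n (1 - c - n%:R) (1 - a - n%:R)])
  (* (4) V~_n is symmetric in x, y, z, whenever defined *)
  /\ (forall x y z : R[i],
        (forall u v w : R[i], perm_eq [:: u; v; w] [:: x; y; z] ->
           Rt_defined n ((2 + 2 * u - v - w - n%:R) / 3)) ->
        [/\ Vt n x y z = Vt n y x z,
            Vt n x y z = Vt n x z y,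
            Vt n x y z = Vt n z y x,
            Vt n x y z = Vt n y z x
          & Vt n x y z = Vt n z x y]).
Proof.
split.
  move=> a c Ha Ha' Hp.
  have HR : Rt n a c = Rt n (1 + c - a) c.
    rewrite !Rt_G //; congr (_ * _).
    by rewrite (G_refl n c (a - c - n%:R)); congr Gf; ring.
  split; last exact HR.
  move: HR; rewrite /Rt /F32.
  have -> : (1 + (1 + c - a) - n%:R) / 2 = (2 + c - a - n%:R) / 2 by congr (_ / _); ring.
  have -> : 1 + c - a - c - n%:R = 1 - a - n%:R by ring.
  have -> : 1 - (1 + c - a) = a - c by ring.
  move=> HR.
  by rewrite mulrAC [poch (1 + c - a) n * _]mulrC -HR [RHS]mulrAC mulfV // !mul1r.
split.
  by case=> a c; rewrite /sig1 /=; congr pair; ring.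
split.
  by case=> a c; rewrite /sig2 /=; congr pair; ring.
split.
  by case=> a c; rewrite /sig1 /sig2 /=; congr pair; ring.
split.
  exists (0, 0); rewrite /sig1 /sig2 /= => /(congr1 fst) /= /eqP.
  by rewrite subr0 addr0 oner_eq0.
split.
  move=> a c Ha Ha' Hc.
  have E : c + (a - c - n%:R) + (1 - a - n%:R) = 1 - (n%:R + n%:R) by ring.
  have E2 : (1 - a - n%:R) + c + (a - c - n%:R) = 1 - (n%:R + n%:R) by ring.
  have E3 : (a - c - n%:R) + c + (1 - a - n%:R) = 1 - (n%:R + n%:R) by ring.
  rewrite !Rt_G //; split; congr (_ * _).
  - by rewrite G_swap; congr Gf; ring.
  - by rewrite G_refl; congr Gf; ring.
  - by rewrite (G_cyc E); congr Gf; ring.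
  - by rewrite (G_cyc E) (G_cyc E2); congr Gf; ring.
  - by rewrite G_swap (G_cyc E3); congr Gf; ring.
move=> x y z H.
pose s := x + y + z.
pose e t := (1 + s - 3 * t - 2 * n%:R) / 3.
have h3 : (3 : R[i]) != 0 by rewrite pnatr_eq0.
have D : forall u v w, perm_eq [:: u; v; w] [:: x; y; z] -> u + v + w = s ->
    Vt n u v w = (-1) ^+ n * Gf n (e w) (e v).
  move=> u v w P S; rewrite /Vt Rt_G; last exact: H.
  by congr (_ * Gf n _ _); rewrite /e -S; field.
have Es : e x + e y + e z = 1 - (n%:R + n%:R) by rewrite /e /s; field.
have P1 : perm_eq [:: y; x; z] [:: x; y; z] by apply/permP => P /=; lia.
have P2 : perm_eq [:: x; z; y] [:: x; y; z] by apply/permP => P /=; lia.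
have P3 : perm_eq [:: z; y; x] [:: x; y; z] by apply/permP => P /=; lia.
have P4 : perm_eq [:: y; z; x] [:: x; y; z] by apply/permP => P /=; lia.
have P5 : perm_eq [:: z; x; y] [:: x; y; z] by apply/permP => P /=; lia.
rewrite (D x y z) ?perm_refl // (D y x z) ?(D x z y) ?(D z y x) ?(D y z x) ?(D z x y) //;
  try by rewrite /s; ring.
split; congr (_ * _).
- by rewrite G_refl; congr Gf; rewrite -Es; ring.
- by rewrite G_swap.
- have E1 : e y + e z + e x = 1 - (n%:R + n%:R) by rewrite -Es; ring.
  by rewrite G_swap (G_cyc E1).
- have E1 : e z + e y + e x = 1 - (n%:R + n%:R) by rewrite -Es; ring.
  by rewrite (G_cyc E1).
- have E1 : e z + e y + e x = 1 - (n%:R + n%:R) by rewrite -Es; ring.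
  have E4 : e x + e z + e y = 1 - (n%:R + n%:R) by rewrite -Es; ring.
  by rewrite (G_cyc E1) (G_cyc E4).
Qed.
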